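(* Suppose there is a pair $(i,j)$ with $l_i=l'_j\neq 0$. Then every $t\in\frac{n+m}{2}+\mathbb Z$ is a pole of $\Gamma_{\mathbb R}(s-\kappa')\Gamma_{\mathbb R}(s-\kappa'+1)$ or of $\Gamma_{\mathbb R}(1-s+\kappa')\Gamma_{\mathbb R}(1-s+\kappa'+1)$, hence a pole of $L(s,\tau)$ or of $L(1-s,\check\tau)$. In particular $\mathrm{Crit}=\emptyset$.
   Context: Let $n,m\ge 1$ be integers, not both equal to $1$. For $N\ge1$ put $L_0^+(N):=\{(w,l)\in\mathbb Z\times\mathbb Z^N:\ l_1>l_2>\dots>l_N,\ l_i+l_{N+1-i}=0 \text{ for all } i,\ w+l_i\equiv N+1 \bmod 2 \text{ for all } i\}$. Fix $(w,l)\in L_0^+(n)$, $(w',l')\in L_0^+(m)$ and $\delta,\delta'\in\{0,1\}$. Representations of the Weil group $W_{\mathbb R}$ (Knapp's notation): for an integer $l\ge1$ and $t\in\mathbb C$, $(l,t)$ is the irreducible 2-dimensional representation, and for $\epsilon\in\{0,1\}$, $(\mathrm{sgn}^\epsilon,t)$ is the 1-dimensional one; $(0,t):=(\mathrm{sgn}^0,t)\oplus(\mathrm{sgn}^1,t)$. Their $L$-factors are $L(s,(l,t))=\Gamma_{\mathbb C}(s+t+\frac l2)$, $L(s,(\mathrm{sgn}^\epsilon,t))=\Gamma_{\mathbb R}(s+t+\epsilon)$, multiplicative in direct sums, where $\Gamma_{\mathbb R}(s)=\pi^{-s/2}\Gamma(s/2)$, $\Gamma_{\mathbb C}(s)=2(2\pi)^{-s}\Gamma(s)$.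 The contragredient of $(l,t)$ is $(l,-t)$ and that of $(\mathrm{sgn}^\epsilon,t)$ is $(\mathrm{sgn}^\epsilon,-t)$. Put $\pi^W:=\bigoplus_{i=1}^{\lfloor n/2\rfloor}(l_i,-w/2)$, plus the summand $(\mathrm{sgn}^\delta,-w/2)$ if $n$ is odd; define $\sigma^W$ analogously from $(w',l',\delta',m)$; and $\tau:=\pi^W\otimes\sigma^W$. A number $t\in\frac{n+m}{2}+\mathbb Z$ is called critical if neither $s\mapsto L(s,\tau)$ nor $s\mapsto L(1-s,\check\tau)$ has a pole at $s=t$; $\mathrm{Crit}$ denotes the set of critical numbers. $\kappa':=\frac12(w+w')$. *)

(* Defs.v *)
From HB Require Import structures.
From mathcomp Require Import all_boot all_order all_algebra.
Set Implicit Arguments. Unset Strict Implicit. Unset Printing Implicit Defensive.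
Import Order.TTheory GRing.Theory Num.Theory.
Local Open Scope ring_scope.

(* (w,l) in L_0^+(N), with l indexed by 'I_N (index i in 'I_N is l_{i+1}). *)
Definition inL0 (N : nat) (w : int) (l : 'I_N -> int) : Prop :=
  [/\ (forall i j : 'I_N, (i < j)%N -> l j < l i),
      (forall i : 'I_N, l i + l (rev_ord i) = 0) &
      (forall i : 'I_N, ((w + l i) %% 2)%Z = ((N.+1)%:Z %% 2)%Z)].

(* Irreducible representations of W_R in Knapp's notation:
   WC2 l t = (l,t) (2-dimensional, l >= 1), WR1 e t = (sgn^e, t).
   The parameters t are taken rational (all those occurring here are in 1/2 Z). *)
Inductive wirr : Type :=
| WC2 (l : nat) (t : rat)
| WR1 (e : bool) (t : rat).

(* A (semisimple) representation is a finite direct sum of irreducibles. *)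
Definition wrep := seq wirr.

(* (l,t) for l >= 0, with the convention (0,t) := (sgn^0,t) + (sgn^1,t). *)
Definition wpair (l : nat) (t : rat) : wrep :=
  if l == 0%N then [:: WR1 false t; WR1 true t] else [:: WC2 l t].

(* Tensor product of irreducibles (Knapp):
   (l,t) x (l',t') = (l+l', t+t') + (|l-l'|, t+t'),
   (l,t) x (sgn^e,t') = (l, t+t'),
   (sgn^e,t) x (sgn^e',t') = (sgn^(e+e'), t+t'). *)
Definition wtens_irr (x y : wirr) : wrep :=
  match x, y with
  | WC2 l t, WC2 l' t' => wpair (l + l') (t + t') ++ wpair (if (l <= l')%N then l' - l else l - l')%N (t + t')
  | WC2 l t, WR1 _ t' => [:: WC2 l (t + t')]
  | WR1 _ t, WC2 l' t' => [:: WC2 l' (t + t')]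
  | WR1 e t, WR1 e' t' => [:: WR1 (e (+) e') (t + t')]
  end.

Definition wtensor (r s : wrep) : wrep :=
  flatten [seq wtens_irr x y | x <- r, y <- s].

Definition wdual_irr (x : wirr) : wirr :=
  match x with WC2 l t => WC2 l (- t) | WR1 e t => WR1 e (- t) end.

Definition wdual (r : wrep) : wrep := map wdual_irr r.

(* pi^W = sum_{i=1}^{floor(N/2)} (l_i, -w/2)  (+ (sgn^delta, -w/2) if N odd). *)
Definition piW (N : nat) (w : int) (l : 'I_N -> int) (delta : bool) : wrep :=
  [seq WC2 `|l i|%N (- (w%:~R / 2)) | i <- [seq j <- enum 'I_N | (nat_of_ord j < N./2)%N]]
  ++ (if odd N then [:: WR1 delta (- (w%:~R / 2))] else [::]).

Definition Gamma_pole (z : rat) : Prop := exists k : nat, z = - k%:R.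
(* Gamma_R(s) = pi^(-s/2) Gamma(s/2);  Gamma_C(s) = 2 (2 pi)^(-s) Gamma(s). *)
Definition GammaR_pole (z : rat) : Prop := Gamma_pole (z / 2).
Definition GammaC_pole (z : rat) : Prop := Gamma_pole z.

(* L(s,(l,t)) = Gamma_C(s+t+l/2), L(s,(sgn^e,t)) = Gamma_R(s+t+e). *)
Definition Lirr_pole (x : wirr) (s : rat) : Prop :=
  match x with
  | WC2 l t => GammaC_pole (s + t + l%:R / 2)
  | WR1 e t => GammaR_pole (s + t + (e : nat)%:R)
  end.

(* L(s, rho) is the product of the factors; since Gamma has no zeros,
   it has a pole at s iff one of its factors does. *)
Fixpoint L_pole (r : wrep) (s : rat) : Prop :=
  match r with
  | [::] => False
  | x :: r' => Lirr_pole x s \/ L_pole r' s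
  end.

(* t in (n+m)/2 + Z, with K = n+m *)
Definition in_shift (K : nat) (t : rat) : Prop :=
  exists k : int, t = K%:R / 2 + k%:~R.

Definition critical (K : nat) (tau : wrep) (t : rat) : Prop :=
  [/\ in_shift K t, ~ L_pole tau t & ~ L_pole (wdual tau) (1 - t)].

(* Main.v *)
Require Import Defs.
From HB Require Import structures.
From mathcomp Require Import all_boot all_order all_algebra.
From mathcomp Require Import zify ring lra.
Import Order.TTheory GRing.Theory Num.Theory.
Local Open Scope ring_scope.

Lemma L_pole_In (r : wrep) x s : List.In x r -> Lirr_pole x s -> L_pole r s.
Proof. elim: r => [|y r IH] //= [->|h] hp; [by left | by right; apply: IH]. Qed.

Lemma In_flatten (T : Type) (ss : seq (seq T)) s x :
  List.In s ss -> List.In x s -> List.In x (flatten ss).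
Proof.
elim: ss => [|s0 ss IH] //= [->|h] hx; apply: List.in_or_app; [by left|right; exact: IH].
Qed.

Lemma In_mem (T : eqType) (x : T) s : x \in s -> List.In x s.
Proof. elim: s => [|y s IH] //=; rewrite in_cons => /orP [/eqP ->|h]; [by left|right; exact: IH]. Qed.

Lemma In_tensor a ta tb e A B : List.In (WC2 a ta) A -> List.In (WC2 a tb) B ->
  List.In (WR1 e (ta + tb)) (wtensor A B).
Proof.
move=> hA hB; rewrite /wtensor.
apply: (@In_flatten _ _ (wtens_irr (WC2 a ta) (WC2 a tb))).
  apply: In_flatten; first exact: (List.in_map _ _ _ hA).
  exact: (List.in_map (fun y => wtens_irr (WC2 a ta) y) _ _ hB).
rewrite /= leqnn subnn /wpair /=; apply: List.in_or_app; right.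
by case: e; [right; left|left].
Qed.

Lemma GR_nat (N : nat) : GammaR_pole (- N%:R) \/ GammaR_pole (- N%:R + 1).
Proof.
rewrite /GammaR_pole /Gamma_pole.
have hN : (N%:R : rat) = (odd N)%:R + 2 * (N./2)%:R.
  by rewrite -natrM -natrD mul2n -[X in X%:R = _]odd_double_half.
rewrite hN; case: (odd N) => /=.
  by right; exists (N./2); field.
by left; exists (N./2); field.
Qed.
Lemma GR_int (a : int) : a <= 0 -> GammaR_pole (a%:~R) \/ GammaR_pole (a%:~R + 1).
Proof.
move=> ha; have -> : a = - (`|a|%N%:Z) by lia.
rewrite mulrNz. exact: GR_nat.
Qed.

Lemma idx_half N w (l : 'I_N -> int) (i : 'I_N) : inL0 w l -> l i <> 0 ->
  exists i0 : 'I_N, (i0 < N./2)%N /\ `|l i0|%N = `|l i|%N.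
Proof.
case=> _ hs _ hnz.
case: (ltnP i N./2) => h1; first by exists i.
case: (ltnP (rev_ord i) N./2) => h2.
  exists (rev_ord i); split => //.
  have -> : l (rev_ord i) = - l i by apply/eqP; rewrite -addr_eq0 addrC hs.
  by rewrite abszN.
exfalso; have ei : rev_ord i = i.
  apply: val_inj => /=; move: h1 h2 => /=.
  have := odd_double_half N; have := ltn_ord i; rewrite -muln2; lia.
by apply: hnz; have := hs i; rewrite ei; lia.
Qed.

Lemma In_piW N w (l : 'I_N -> int) delta (i0 : 'I_N) : (i0 < N./2)%N ->
  List.In (WC2 `|l i0|%N (- (w%:~R / 2))) (piW w l delta).
Proof.
move=> h; rewrite /piW; apply: List.in_or_app; left.
apply: (List.in_map (fun i : 'I_N => WC2 `|l i|%N (- (w%:~R / 2)))).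
by apply: In_mem; rewrite mem_filter mem_enum h.
Qed.

Lemma GP_eq x y : x = y -> GammaR_pole y -> GammaR_pole x.
Proof. by move=> ->. Qed.

Arguments idx_half {N w l i}.
Arguments In_piW {N w l delta i0}.
Arguments L_pole_In {r x s}.

Theorem lemma2p4 (n m : nat) (w w' : int) (l : 'I_n -> int) (l' : 'I_m -> int)
  (delta delta' : bool) :
  (0 < n)%N -> (0 < m)%N -> ~ (n = 1%N /\ m = 1%N) ->
  inL0 w l -> inL0 w' l' ->
  (exists (i : 'I_n) (j : 'I_m), l i = l' j /\ l i <> 0) ->
  let tau := wtensor (piW w l delta) (piW w' l' delta') in
  let kappa' : rat := (w + w')%:~R / 2 in
  (forall t : rat, in_shift (n + m) t ->
     ((GammaR_pole (t - kappa') \/ GammaR_pole (t - kappa' + 1)) \/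
      (GammaR_pole (1 - t + kappa') \/ GammaR_pole (1 - t + kappa' + 1))) /\
     (L_pole tau t \/ L_pole (wdual tau) (1 - t))) /\
  (forall t : rat, ~ critical (n + m) tau t).
Proof.
move=> _ _ _ hL hL' [i [j [hij hnz]]] tau kappa'.
have hnz' : l' j <> 0 by rewrite -hij.
have [i0 [hi0 ei0]] := idx_half hL hnz.
have [j0 [hj0 ej0]] := idx_half hL' hnz'.
have hin : forall e, List.In (WR1 e (- (w%:~R / 2) + - (w'%:~R / 2))) tau.
  move=> e; apply: (@In_tensor `|l i0|%N); first exact: In_piW.
  by rewrite ei0 hij -ej0; exact: In_piW.
have hind : forall e, List.In (WR1 e (- (- (w%:~R / 2) + - (w'%:~R / 2)))) (wdual tau).
  by move=> e; apply: (List.in_map wdual_irr _ _ (hin e)).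
have [c hc] : exists c : int, w + w' = (n + m)%:Z + 2 * c.
  case: hL => _ _ p; case: hL' => _ _ p'.
  have := p i; have := p' j; rewrite -hij.
  move=> h1 h2; exists ((w + w' - (n + m)%:Z) %/ 2)%Z; lia.
have main : forall t : rat, in_shift (n + m) t ->
     ((GammaR_pole (t - kappa') \/ GammaR_pole (t - kappa' + 1)) \/
      (GammaR_pole (1 - t + kappa') \/ GammaR_pole (1 - t + kappa' + 1))) /\
     (L_pole tau t \/ L_pole (wdual tau) (1 - t)).
  move=> t [k hk].
  have ha : t - kappa' = (k - c)%:~R.
    rewrite hk /kappa' hc intrD intrM intrB.
    have -> : ((n + m)%N%:~R : rat) = (n + m)%:R by [].
    have -> : (2%:~R : rat) = 2 by []. by field.
  have E1 : forall e : bool, t + (- (w%:~R / 2) + - (w'%:~R / 2)) + (e : nat)%:R = t - kappa' + (e : nat)%:R.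
    by move=> e; rewrite /kappa' intrD; field.
  have E2 : forall e : bool, 1 - t + - (- (w%:~R / 2) + - (w'%:~R / 2)) + (e : nat)%:R = 1 - t + kappa' + (e : nat)%:R.
    by move=> e; rewrite /kappa' intrD; field.
  have G : ((GammaR_pole (t - kappa') \/ GammaR_pole (t - kappa' + 1)) \/
      (GammaR_pole (1 - t + kappa') \/ GammaR_pole (1 - t + kappa' + 1))).
    have [hkc|hkc] := lerP (k - c) 0.
      by left; rewrite ha; apply: GR_int.
    right; have -> : 1 - t + kappa' = (1 - (k - c))%:~R by rewrite intrB -ha; ring.
    by apply: GR_int; lia.
  split => //.
  case: G => [[h|h]|[h|h]].
  - left; apply: (L_pole_In (hin false)); rewrite /=; apply: (GP_eq _ _ _ h); rewrite /kappa' intrD; by field.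
  - left; apply: (L_pole_In (hin true)); rewrite /=; apply: (GP_eq _ _ _ h); rewrite /kappa' intrD; by field.
  - right; apply: (L_pole_In (hind false)); rewrite /=; apply: (GP_eq _ _ _ h); rewrite /kappa' intrD; by field.
  - right; apply: (L_pole_In (hind true)); rewrite /=; apply: (GP_eq _ _ _ h); rewrite /kappa' intrD; by field.
split => // t [hs h1 h2].
by case: (main t hs) => _ [].
Qed.
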